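(* Let $n\ge 2$, let $A$ be a set of $n$ agents, and let $v$ assign a real value $v(C)$ to every nonempty $C\subseteq A$. Let $S_1,S_2\subseteq\{2,\dots,n\}$ be two coalition size sets, each containing $n$. Suppose that every integer partition of $n$ is reachable from the node $[n]$ in $G_{S_1}$ or in $G_{S_2}$ (i.e., for every integer partition $P$ of $n$ there is $i\in\{1,2\}$ and a directed path from $[n]$ to $P$ in $G_{S_i}$). Then $$\max\big(V^{S_1}(A),\,V^{S_2}(A)\big)\;=\;\max_{\mathcal{CS}\in\Pi(A)}\ \sum_{C\in\mathcal{CS}} v(C),$$ i.e., the CDP procedure run with the pair $(S_1,S_2)$ returns the value of an optimal coalition structure.
   Context: A coalition structure of $A$ is a partition of $A$ into nonempty pairwise disjoint coalitions; $\Pi(A)$ is the set of all coalition structures, and the value of $\mathcal{CS}$ is $\sum_{C\in\mathcal{CS}}v(C)$. Restricted integer partition graph: for a set $S\subseteq\{2,\dots,n\}$, $G_S$ is the directed graph whose nodes are the integer partitions of $n$ (multisets of positive integers summing to $n$), with an edge from $P$ to $P'$ whenever $P'$ is obtained from $P$ by replacing a single part $x$ of $P$ with $x\in S$ by two positive parts $x_1,x_2$ with $x_1+x_2=x$. The node $[n]$ is the partition with one part. Dynamic program with size set $S$: initialize a table $V_t(C)=v(C)$ for every nonempty $C\subseteq A$. Then, for each $s\in S$ in increasing order, for each coalition $C\subseteq A$ with $|C|=s$, and for each unordered pair $\{C_1,C_2\}$ of nonempty disjoint sets with $C_1\cup C_2=C$, set $V_t(C)\leftarrow\max\big(V_t(C),\,V_t(C_1)+V_t(C_2)\big)$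 (using the current table values). Let $V^{S}(A)$ denote the final value of $V_t(A)$ after this procedure. CDP runs this program separately (with fresh tables) for $S_1$ and for $S_2$ and returns the larger of $V^{S_1}(A)$ and $V^{S_2}(A)$. *)

(* Defs.v *)
From mathcomp Require Import all_boot all_order all_algebra.
Set Implicit Arguments. Unset Strict Implicit. Unset Printing Implicit Defensive.
Import Order.TTheory GRing.Theory Num.Theory.
Local Open Scope ring_scope.

Definition cs_value (R : realFieldType) (A : finType) (v : {set A} -> R)
  (CS : {set {set A}}) : R := \sum_(C in CS) v C.

(* Subsets of C have
   size < s, so the values they read are not modified during this stage; the
   order in which coalitions of size s are processed is therefore irrelevant.
   Each unordered pair {C1,C2} appears twice as (C1, C :\: C1), which does
   not change a max. *)
Definition dp_stage (R : realFieldType) (A : finType) (s : nat)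
  (V : {set A} -> R) : {set A} -> R :=
  fun C => if #|C| == s then
             \big[Num.max/V C]_(C1 : {set A} | (C1 \proper C) && (C1 != set0))
                (V C1 + V (C :\: C1))
           else V C.

Definition dp_value (R : realFieldType) (A : finType) (S : pred nat)
  (v : {set A} -> R) : R :=
  (foldl (fun V s => if S s then dp_stage s V else V) v
         (iota 0 #|A|.+1)) [set: A].

(* Integer partitions of n: finite multisets of positive integers summing to
   n, represented by sequences (considered up to permutation). *)
Definition int_partition (n : nat) (P : seq nat) : bool :=
  all (fun x => 0 < x)%N P && (sumn P == n).

Definition gS_edge (S : pred nat) (P P' : seq nat) : Prop :=
  exists x x1 x2 : nat,
    [/\ x \in P, S x, (0 < x1)%N, (0 < x2)%N &
        ((x1 + x2 = x)%N /\ perm_eq P' (x1 :: x2 :: rem x P))].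

Inductive gS_reach (S : pred nat) : seq nat -> seq nat -> Prop :=
| gS_reach_refl P : gS_reach S P P
| gS_reach_step P Q P' : gS_reach S P Q -> gS_edge S Q P' -> gS_reach S P P'.

(* Main.v *)
Require Import Defs.
From mathcomp Require Import all_boot all_order all_algebra zify.
Import Order.TTheory GRing.Theory Num.Theory.
Local Open Scope ring_scope.
Set Implicit Arguments. Unset Strict Implicit.

Section BM.
Variable R : realFieldType.
Variable I : eqType.

Lemma bm_ge (r : seq I) (P : pred I) (F : I -> R) (x : R) :
  x <= \big[Num.max/x]_(i <- r | P i) F i.
Proof.
elim: r => [|a r IH]; first by rewrite big_nil.
rewrite big_cons; case: (P a) => //; by rewrite le_max IH orbT.
Qed.

Lemma bm_term (r : seq I) (P : pred I) (F : I -> R) (x : R) i :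
  i \in r -> P i -> F i <= \big[Num.max/x]_(j <- r | P j) F j.
Proof.
elim: r => [|a r IH] //; rewrite inE big_cons => /orP[/eqP-> Pi|ir Pi].
  by rewrite Pi le_max lexx.
case: (P a); last exact: IH.
by rewrite le_max IH ?orbT.
Qed.

Lemma bm_cases (r : seq I) (P : pred I) (F : I -> R) (x : R) :
  \big[Num.max/x]_(j <- r | P j) F j = x \/
  exists2 i, P i & \big[Num.max/x]_(j <- r | P j) F j = F i.
Proof.
elim: r => [|a r IH]; first by rewrite big_nil; left.
rewrite big_cons; case Pa: (P a) => //.
case: (leP (F a) (\big[Num.max/x]_(j <- r | P j) F j)) => h //.
by right; exists a.
Qed.
End BM.

Lemma pairwise_rem (T : eqType) (r : rel T) : symmetric r ->
  forall (s : seq T) x, x \in s -> pairwise r s -> pairwise r (x :: rem x s).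
Proof.
move=> sym; elim => [//|y s IH] x xin /= /andP [ay pws].
have [exy|nxy] := eqVneq y x.
  by rewrite -exy ay pws.
move: xin; rewrite inE eq_sym (negbTE nxy) /= => xs.
have := IH x xs pws; rewrite pairwise_cons => /andP [ax pwr].
apply/andP; split; first by rewrite /= sym (allP ay _ xs) ax.
rewrite pwr andbT.
by apply/allP => z /mem_rem; apply: (allP ay).
Qed.

Lemma uniq_pairwise (T : eqType) (r : rel T) (s : seq T) : uniq s ->
  {in s &, forall X Y, X != Y -> r X Y} -> pairwise r s.
Proof.
elim: s => [//|y s IH] /= /andP [ys us] h.
rewrite IH //; last by move=> X Y Xs Ys; apply: h; rewrite inE ?Xs ?Ys orbT.
rewrite andbT; apply/allP => z zs; apply: h; rewrite ?inE ?eqxx ?zs ?orbT //.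
by apply: contraNneq ys => ->.
Qed.

Section DP.
Variable R : realFieldType.
Variable A : finType.
Variable S : pred nat.
Variable v : {set A} -> R.

Definition T k := foldl (fun V s => if S s then dp_stage s V else V) v (iota 0 k).

Lemma TS k : T k.+1 = (if S k then dp_stage k (T k) else T k).
Proof. by rewrite /T -addn1 iotaD foldl_cat. Qed.

Lemma T_const k (C : {set A}) : (#|C| < k)%N -> T k C = T #|C|.+1 C.
Proof.
elim: k => [//|k IH]; rewrite ltnS leq_eqVlt => /orP[/eqP->//|lt].
rewrite TS -(IH lt); case: (S k) => //.
by rewrite /dp_stage (ltn_eqF lt).
Qed.

Lemma T_ge k (C : {set A}) : v C <= T k C.
Proof.
elim: k => [//|k IH]; rewrite TS; case: (S k) => //.
rewrite /dp_stage; case: (_ == _) => //.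
exact: le_trans IH (bm_ge _ _ _ _).
Qed.

Definition Vf := T #|A|.+1.

Lemma Vf_split (C C1 : {set A}) : S #|C| -> C1 \proper C -> C1 != set0 ->
  Vf C1 + Vf (C :\: C1) <= Vf C.
Proof.
move=> SC pr ne.
have cC : (#|C| < #|A|.+1)%N by rewrite ltnS max_card.
have c1 : (#|C1| < #|C|)%N by exact: proper_card.
have c2 : (#|C :\: C1| < #|C|)%N.
  rewrite cardsD (setIidPr (proper_sub pr)).
  have : (0 < #|C1|)%N by rewrite card_gt0.
  by move: c1; case: #|C| => // m; lia.
rewrite /Vf (T_const cC) (T_const (ltn_trans c1 cC)) (T_const (ltn_trans c2 cC)).
rewrite -(T_const c1) -(T_const c2) TS SC /dp_stage eqxx.
apply: (bm_term _ _ (mem_index_enum C1)).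
by rewrite pr ne.
Qed.

Lemma T_exists k (C : {set A}) : C != set0 ->
  exists P, partition P C /\ T k C = cs_value v P.
Proof.
elim: k C => [|k IH] C neC.
  exists [set C]; split; last by rewrite /cs_value big_set1.
  by rewrite /partition cover1 eqxx trivIset1 inE eq_sym neC.
rewrite TS; case: (S k); last exact: IH.
rewrite /dp_stage; case: (_ == _); last exact: IH.
case: (bm_cases (index_enum {set A}) (fun C1 => (C1 \proper C) && (C1 != set0)) (fun C1 => T k C1 + T k (C :\: C1)) (T k C)) => [->|[C1 /andP[pr ne1] ->]]; first exact: IH.
have ne2 : C :\: C1 != set0.
  by rewrite setD_eq0; apply: contraNN (proper_subn pr) => ->.
have [P1 [pP1 ->]] := IH C1 ne1.
have [P2 [pP2 ->]] := IH _ ne2.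
have sC1 : C1 \subset C by exact: proper_sub.
have dC : [disjoint C1 & C :\: C1].
  by rewrite -setI_eq0; apply/eqP/setP => z; rewrite !inE; case: (z \in C1); rewrite ?andbF.
have dP : [disjoint P1 & P2].
  rewrite -setI_eq0; apply/eqP/setP => B; rewrite !inE; apply/negP => /andP [b1 b2].
  have /set0Pn [z zB] := partition_neq0 pP1 b1.
  have z1 := subsetP (partitionS pP1 b1) z zB.
  have z2 := subsetP (partitionS pP2 b2) z zB.
  by move: z1 z2; rewrite !inE => ->.
exists (P1 :|: P2); split.
  rewrite /partition /cover bigcup_setU -!/(cover _) (cover_partition pP1) (cover_partition pP2).
  have -> : C1 :|: C :\: C1 = C.
    by apply/setP=> z; rewrite !inE; case: (boolP (z \in C1)) => [/(subsetP sC1)->|].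
  rewrite eqxx /=.
  rewrite trivIsetU ?(partition_trivIset pP1) ?(partition_trivIset pP2) //.
    by rewrite inE (partition0 pP1) (partition0 pP2).
  by rewrite (cover_partition pP1) (cover_partition pP2).
rewrite /cs_value -bigU //; by apply: eq_bigl => B; rewrite !inE.
Qed.

Definition crd (C : {set A}) := #|C|.

Definition dj (X Y : {set A}) := [disjoint X & Y].

Lemma dj_sym : symmetric dj.
Proof. by move=> X Y; rewrite /dj disjoint_sym. Qed.

Lemma dj_U (C1 C2 D : {set A}) : dj C1 D -> dj C2 D -> dj (C1 :|: C2) D.
Proof. by rewrite /dj -!setI_eq0 setIUl => /eqP-> /eqP->; rewrite setU0. Qed.

Lemma claim P0 Q : gS_reach S P0 Q -> P0 = [:: #|A|] -> forall s : seq {set A},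
  pairwise dj s -> perm_eq (map crd (s)) Q ->
  \sum_(C <- s) Vf C <= Vf setT.
Proof.
elim => {Q} [P|P Q Q' _ IH [x [x1 [x2 [xQ Sx x1p x2p [ex pe]]]]]] eP s pw ps; first subst P.
  have := perm_size ps; rewrite size_map.
  case: s pw ps => [|C [|? ?]] //= _ ps _.
  have : crd C \in [:: #|A|] by rewrite -(perm_mem ps) inE.
  rewrite inE /crd => /eqP cC.
  have eC : C = [set: A].
    apply/eqP; rewrite eqEcard subsetT /= cardsT cC leqnn //=.
  by rewrite eC big_seq1.
have ps1 := perm_trans ps pe.
have : x1 \in map crd (s) by rewrite (perm_mem ps1) inE eqxx.
case/mapP => C1 C1s ex1.
have pr1 := perm_to_rem C1s.
have ps2 : perm_eq (map crd (rem C1 s)) (x2 :: rem x Q).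
  have := perm_map crd pr1; rewrite map_cons -ex1 => h.
  by rewrite -(perm_cons x1) -(permPl h).
have : x2 \in map crd (rem C1 s) by rewrite (perm_mem ps2) inE eqxx.
case/mapP => C2 C2s ex2.
have pr2 := perm_to_rem C2s.
have ps3 : perm_eq (map crd (rem C2 (rem C1 s))) (rem x Q).
  have := perm_map crd pr2; rewrite map_cons -ex2 => h.
  by rewrite -(perm_cons x2) -(permPl h).
have := pairwise_rem dj_sym C1s pw; rewrite pairwise_cons => /andP [a1 pw1].
have := pairwise_rem dj_sym C2s pw1; rewrite pairwise_cons => /andP [a2 pw2].
have d12 : dj C1 C2 := allP a1 _ C2s.
set s2 := rem C2 (rem C1 s) in ps3 a2 pw2.
have cU : #|C1 :|: C2| = x.
  by rewrite cardsU (disjoint_setI0 d12) cards0 subn0 -ex ex1 ex2.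
have := IH eP ((C1 :|: C2) :: s2).
have cU' : crd (C1 :|: C2) = x := cU.
rewrite pairwise_cons pw2 andbT map_cons cU'.
have -> : all (dj (C1 :|: C2)) s2.
  apply/allP => D Ds; apply: dj_U; first by apply: (allP a1); exact: mem_rem Ds.
  exact: (allP a2).
have -> : perm_eq (x :: map crd (s2)) Q.
  by rewrite perm_sym (permPl (perm_to_rem xQ)) perm_cons perm_sym.
move=> /(_ isT isT); rewrite big_cons => h.
have -> : \sum_(C <- s) Vf C = Vf C1 + (Vf C2 + \sum_(C <- s2) Vf C).
  by rewrite (perm_big _ pr1) big_cons (perm_big _ pr2) big_cons.
rewrite addrA.
apply: le_trans h; rewrite lerD2r.
have ne1 : C1 != set0 by rewrite -card_gt0; move: x1p; rewrite ex1.
have ne2 : C2 != set0 by rewrite -card_gt0; move: x2p; rewrite ex2.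
have e2 : (C1 :|: C2) :\: C1 = C2.
  apply/setP => z; rewrite !inE; case: (boolP (z \in C2)) => z2.
    by rewrite orbT andbT (disjointFl d12 z2).
  by rewrite orbF andNb.
rewrite -{1}e2; apply: Vf_split => //; first by rewrite cU.
rewrite properEneq subsetUl andbT; apply: contraNneq ne2 => e.
by rewrite -e2 -e setDv.
Qed.
End DP.

Theorem theorem1 (R : realFieldType) (A : finType) (n : nat)
  (v : {set A} -> R) (S1 S2 : pred nat) :
  (2 <= n)%N -> #|A| = n ->
  (forall s, S1 s -> (2 <= s <= n)%N) -> S1 n ->
  (forall s, S2 s -> (2 <= s <= n)%N) -> S2 n ->
  (forall P : seq nat, int_partition n P ->
     gS_reach S1 [:: n] P \/ gS_reach S2 [:: n] P) ->
  let best := Num.max (dp_value S1 v) (dp_value S2 v) in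
  (exists CS : {set {set A}}, partition CS [set: A] /\ cs_value v CS = best) /\
  (forall CS : {set {set A}}, partition CS [set: A] -> cs_value v CS <= best).
Proof.
move=> n2 cA h1 Sn1 h2 Sn2 reach best.
have neT : [set: A] != set0 by rewrite -card_gt0 cardsT cA; lia.
split.
  have [P1 [pP1 e1]] := @T_exists _ _ S1 v #|A|.+1 _ neT.
  have [P2 [pP2 e2]] := @T_exists _ _ S2 v #|A|.+1 _ neT.
  have e1' : dp_value S1 v = cs_value v P1 := e1.
  have e2' : dp_value S2 v = cs_value v P2 := e2.
  rewrite /best; case: leP => _; [exists P2 | exists P1]; split => //.
move=> CS pCS.
set s := enum CS.
have pw : pairwise (@dj A) s.
  apply: uniq_pairwise; first exact: enum_uniq.
  move=> X Y; rewrite !mem_enum => X1 Y1 nXY.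
  move/trivIsetP: (partition_trivIset pCS) => tI; exact: tI X Y X1 Y1 nXY.
have ip : int_partition n (map (@crd A) s).
  rewrite /int_partition; apply/andP; split.
    apply/allP => k /mapP [C Cs ->]; rewrite /crd card_gt0.
    by apply: (partition_neq0 pCS); rewrite -mem_enum.
  rewrite sumnE big_map big_enum /= -cA -cardsT (card_partition pCS).
  by [].
have le1 : forall S, gS_reach S [:: n] (map (@crd A) s) ->
    cs_value v CS <= dp_value S v.
  move=> S r; rewrite -cA in r.
  have h := @claim _ _ S v _ _ r erefl s pw (perm_refl _).
  apply: (le_trans _ h); rewrite /cs_value -big_enum.
  by apply: ler_sum => C _; exact: T_ge.
rewrite /best le_max.
by case: (reach _ ip) => r; rewrite (le1 _ r) ?orbT.
Qed.
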